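(* Let $G$ be a countable infinite discrete group, $X$ an infinite compact Hausdorff space and $\beta: G\curvearrowright X$ a minimal, topologically free continuous action with no $G$-invariant regular Borel probability measure and with dynamical comparison. Let $Y$ be a compact Hausdorff space and $\alpha: G\curvearrowright X\times Y$ the action $\alpha_g(x,y)=(\beta_g(x),y)$. Then $\alpha$ has paradoxical comparison.
   Context: Subequivalence for an action of $G$ on a space $Z$: for closed $F$ and open $O$ in $Z$, $F\prec O$ if there exist a finite open cover $\mathcal{U}$ of $F$ and $s_U\in G$ with the sets $s_UU$ pairwise disjoint subsets of $O$; for open $V$, $V\prec O$ means $F\prec O$ for all closed $F\subset V$. Dynamical comparison (for $\beta$): $V\prec O$ for every open $V$ and nonempty open $O$ in $X$ with $\mu(V)<\mu(O)$ for all $G$-invariant regular Borel probability measures $\mu$. Topologically free: fixed point sets of non-identity elements have empty interior. Paradoxical comparison (for $\alpha$): for every nonempty open $O\subset X\times Y$ and closed $F\subset O$ there are disjoint nonempty open $O_1,O_2\subset O$ with $F\prec O_1$, $F\prec O_2$. *)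

(* Defs.v *)
From HB Require Import structures.
From mathcomp Require Import all_boot all_order all_algebra.
From mathcomp Require Import all_classical all_reals all_analysis.
From mathcomp Require Import Rstruct Rstruct_topology.

Set Implicit Arguments.
Unset Strict Implicit.
Unset Printing Implicit Defensive.

Import Order.TTheory GRing.Theory Num.Theory.
Local Open Scope classical_set_scope.
Local Open Scope ring_scope.

Local Notation R := Rdefinitions.R.

Definition is_action (G : groupType) (Z : Type) (act : G -> Z -> Z) : Prop :=
  (forall z, act 1%g z = z) /\
  (forall g h z, act (g * h)%g z = act g (act h z)).

Definition continuous_action (G : groupType) (Z : topologicalType)
  (act : G -> Z -> Z) : Prop :=
  is_action act /\ forall g, continuous (act g).

Definition orbit (G : groupType) (Z : Type) (act : G -> Z -> Z) (z : Z) : set Z :=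
  [set act g z | g in [set: G]].

Definition minimal_action (G : groupType) (Z : topologicalType)
  (act : G -> Z -> Z) : Prop :=
  forall z : Z, closure (orbit act z) = [set: Z].

Definition topologically_free (G : groupType) (Z : topologicalType)
  (act : G -> Z -> Z) : Prop :=
  forall g : G, g <> 1%g -> interior [set z | act g z = z] = set0.

Definition borel_set (Z : topologicalType) (A : set Z) : Prop :=
  <<s [set U : set Z | open U] >> A.

(** [mu] is a regular Borel probability measure on [Z] (its values on
    non-Borel sets are irrelevant). *)
Definition regular_borel_probability (Z : topologicalType) (mu : set Z -> R)
  : Prop :=
  [/\ (forall A, borel_set A -> 0 <= mu A),
      mu [set: Z] = 1,
      (forall F : nat -> set Z, (forall n, borel_set (F n)) ->
          trivIset [set: nat] F ->
          (fun n => \sum_(i < n) mu (F i)) @ \oo --> mu (\bigcup_n F n)),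
      (forall A, borel_set A -> forall e : R, 0 < e ->
          exists U, [/\ open U, A `<=` U & mu U < mu A + e]) &
      (forall A, borel_set A -> forall e : R, 0 < e ->
          exists K, [/\ compact K, K `<=` A & mu A - e < mu K])].

Definition invariant_measure (G : groupType) (Z : topologicalType)
  (act : G -> Z -> Z) (mu : set Z -> R) : Prop :=
  forall g A, borel_set A -> mu (act g @^-1` A) = mu A.

Definition invariant_regular_borel_probability (G : groupType)
  (Z : topologicalType) (act : G -> Z -> Z) (mu : set Z -> R) : Prop :=
  regular_borel_probability mu /\ invariant_measure act mu.

Definition subeq_closed (G : groupType) (Z : topologicalType)
  (act : G -> Z -> Z) (F O : set Z) : Prop :=
  exists (n : nat) (U : 'I_n -> set Z) (s : 'I_n -> G),
    [/\ (forall i, open (U i)),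
        F `<=` \bigcup_(i in [set: 'I_n]) U i,
        (forall i, act (s i) @` U i `<=` O) &
        (forall i j, i <> j -> act (s i) @` U i `&` act (s j) @` U j = set0)].

Definition subeq_open (G : groupType) (Z : topologicalType)
  (act : G -> Z -> Z) (V O : set Z) : Prop :=
  forall F, closed F -> F `<=` V -> subeq_closed act F O.

Definition dynamical_comparison (G : groupType) (Z : topologicalType)
  (act : G -> Z -> Z) : Prop :=
  forall V O : set Z, open V -> open O -> O !=set0 ->
    (forall mu, invariant_regular_borel_probability act mu -> mu V < mu O) ->
    subeq_open act V O.

Definition paradoxical_comparison (G : groupType) (Z : topologicalType)
  (act : G -> Z -> Z) : Prop :=
  forall O F : set Z, open O -> O !=set0 -> closed F -> F `<=` O ->
    exists O1 O2 : set Z,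
      [/\ open O1 /\ open O2, O1 !=set0 /\ O2 !=set0,
          O1 `<=` O /\ O2 `<=` O, O1 `&` O2 = set0 &
          subeq_closed act F O1 /\ subeq_closed act F O2].

Definition prod_action (G : groupType) (X Y : Type) (beta : G -> X -> X)
  : G -> X * Y -> X * Y :=
  fun g p => (beta g p.1, p.2).

(* Main.v *)
Require Import Defs.
From HB Require Import structures.
From mathcomp Require Import all_boot all_order all_algebra.
From mathcomp Require Import all_classical all_reals all_analysis.
From mathcomp Require Import Rstruct Rstruct_topology.
From Stdlib Require Classical_Prop.
From mathcomp Require Import zify.
Set Implicit Arguments.
Unset Strict Implicit.
Unset Printing Implicit Defensive.
Local Open Scope classical_set_scope.

Section Subeq.
Variables (G : groupType) (Z : topologicalType) (act : G -> Z -> Z).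

Lemma subeq_mono F F' O O' : F' `<=` F -> O `<=` O' ->
  subeq_closed act F O -> subeq_closed act F' O'.
Proof.
move=> FF OO [n [U [s [Uo Fc Ui Ud]]]].
exists n, U, s; split => //.
- by move=> z /FF /Fc.
- by move=> i z /(Ui i) /OO.
Qed.

Lemma subeq_set0 O : subeq_closed act set0 O.
Proof.
exists 0%N, (fun _ => set0), (fun _ => 1%g); split.
- by move=> i; case: i.
- by [].
- by move=> i; case: i.
- by move=> i; case: i.
Qed.

Lemma subeq_union F1 F2 O1 O2 : subeq_closed act F1 O1 -> subeq_closed act F2 O2 ->
  O1 `&` O2 = set0 -> subeq_closed act (F1 `|` F2) (O1 `|` O2).
Proof.
move=> [n1 [U1 [s1 [Uo1 Fc1 Ui1 Ud1]]]] [n2 [U2 [s2 [Uo2 Fc2 Ui2 Ud2]]]] O12.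
pose U (i : 'I_(n1 + n2)) := match fintype.split i with inl a => U1 a | inr b => U2 b end.
pose s (i : 'I_(n1 + n2)) := match fintype.split i with inl a => s1 a | inr b => s2 b end.
have O12' : forall z, O1 z -> O2 z -> False.
  by move=> z h1 h2; have : (O1 `&` O2) z by []; rewrite O12.
exists (n1 + n2)%N, U, s; split.
- by move=> i; rewrite /U; case: (fintype.split i).
- move=> z [/Fc1 [a _ Ua]|/Fc2 [b _ Ub]].
  + exists (unsplit (inl a)) => //; by rewrite /U unsplitK.
  + exists (unsplit (inr b)) => //; by rewrite /U unsplitK.
- move=> i z; rewrite /U /s; case: (fintype.split i) => [a|b] h.
  + by left; apply: (Ui1 a).
  + by right; apply: (Ui2 b).
- move=> i j ij; apply/seteqP; split => // z [].
  have eqs : forall k l : 'I_(n1 + n2), fintype.split k = fintype.split l -> k = l.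
    by move=> k l e; rewrite -(splitK k) -(splitK l) e.
  rewrite /U /s; case Hi: (fintype.split i) => [a|b]; case Hj: (fintype.split j) => [c|d] h1 h2.
  + have ac : a <> c by move=> e; apply: ij; apply: eqs; rewrite Hi Hj e.
    by have : (act (s1 a) @` U1 a `&` act (s1 c) @` U1 c) z by []; rewrite Ud1.
  + by apply: (O12' z); [apply: (Ui1 a) | apply: (Ui2 d)].
  + by apply: (O12' z); [apply: (Ui1 c) | apply: (Ui2 b)].
  + have bd : b <> d by move=> e; apply: ij; apply: eqs; rewrite Hi Hj e.
    by have : (act (s2 b) @` U2 b `&` act (s2 d) @` U2 d) z by []; rewrite Ud2.
Qed.
End Subeq.

Lemma openX_ (X Y : topologicalType) (A : set X) (B : set Y) :
  open A -> open B -> open (A `*` B).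
Proof.
move=> oA oB; rewrite openE => -[a b] [/= Aa Bb].
exists (A, B) => //=; split; apply: open_nbhs_nbhs; by split.
Qed.

Fixpoint unionN T (S : nat -> set T) (m : nat) : set T :=
  if m is m'.+1 then unionN S m' `|` S m' else set0.

Lemma unionNP T (S : nat -> set T) m z :
  unionN S m z <-> exists2 j, (j < m)%N & S j z.
Proof.
elim: m => [|m IH] /=; first by split => // -[].
split.
- case=> [/IH [j jm Sj]|Sm]; first by exists j => //; apply: ltnW.
  by exists m.
- case=> j; rewrite ltnS leq_eqVlt => /orP [/eqP -> |jm] Sj; first by right.
  by left; apply/IH; exists j.
Qed.

Lemma subeq_lift (G : groupType) (X Y : topologicalType) (beta : G -> X -> X)
  (C : set X) (B : set Y) : open B -> subeq_closed beta setT C ->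
  subeq_closed (@prod_action G X Y beta) (setT `*` B) (C `*` B).
Proof.
move=> oB [n [U [s [Uo Fc Ui Ud]]]].
exists n, (fun i => U i `*` B), s; split.
- by move=> i; apply: openX_.
- move=> [x y] [_ /= By]; have [i _ Ux] := Fc x I; by exists i.
- move=> i _ [[x y] [/= Ux By] <-]; split => //=; apply: (Ui i); by exists x.
- move=> i j ij; apply/seteqP; split => // z [[[x y] [/= Ux _] e1] [[x' y'] [/= Ux' _] e2]].
  have : (beta (s i) @` U i `&` beta (s j) @` U j) z.1.
    split; [exists x => //; by rewrite -e1 | exists x' => //; by rewrite -e2].
  by rewrite Ud.
Qed.

Lemma subeq_unionN (G : groupType) (X Y : topologicalType) (beta : G -> X -> X)
  m (C : nat -> set X) (B : nat -> set Y) :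
  (forall j, (j < m)%N -> open (B j) /\ subeq_closed beta setT (C j)) ->
  (forall i j, (i < m)%N -> (j < m)%N -> i <> j -> C i `&` C j = set0) ->
  subeq_closed (@prod_action G X Y beta) (unionN (fun j => setT `*` B j) m)
    (unionN (fun j => C j `*` B j) m).
Proof.
elim: m => [|m IH] hB hC /=; first exact: subeq_set0.
apply: subeq_union.
- apply: IH => [j jm|i j im jm]; [apply: hB | apply: hC] => //; exact: ltnW.
- have [oB sC] := hB m (ltnSn m); exact: subeq_lift.
- apply/seteqP; split => // z [/unionNP [j jm [Cj _]] [Cm _]].
  have : (C j `&` C m) z.1 by [].
  rewrite hC //; [exact: ltnW | by move=> e; rewrite e ltnn in jm].
Qed.

Lemma act_inj (G : groupType) (Z : Type) (act : G -> Z -> Z) g :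
  is_action act -> injective (act g).
Proof.
move=> [h1 hM] z1 z2 e.
have K : forall z, act (g^-1)%g (act g z) = z by move=> z; rewrite -hM mulVg h1.
by rewrite -(K z1) e K.
Qed.

Lemma two_points (X : Type) : infinite_set [set: X] ->
  exists z1 z2 : X, z1 <> z2.
Proof.
move=> inf; have [z1 _] := infinite_setN0 inf.
apply: Classical_Prop.NNPP => H; apply: inf.
have -> : [set: X] = [set z1].
  apply/seteqP; split => // z _; apply: Classical_Prop.NNPP => nz; apply: H.
  by exists z1, z; move=> e; apply: nz; rewrite /= e.
exact: finite_set1.
Qed.

Lemma open_not_single (G : groupType) (X : topologicalType) (beta : G -> X -> X) :
  infinite_set [set: X] -> continuous_action beta ->
  ~ (exists mu, invariant_regular_borel_probability beta mu) ->
  dynamical_comparison beta ->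
  forall (A : set X) (x : X), open A -> A x -> exists y, A y /\ y <> x.
Proof.
move=> inf [isa _] nomu dc A x oA Ax.
apply: Classical_Prop.NNPP => H.
have single : forall y, A y -> y = x.
  by move=> y Ay; apply: Classical_Prop.NNPP => nyx; apply: H; exists y.
have sub : subeq_open beta [set: X] A.
  apply: dc => //; first exact: (@openT X).
  - by exists x.
  - by move=> mu hmu; exfalso; apply: nomu; exists mu.
have [n [U [s [Uo Fc Ui Ud]]]] := sub setT closedT (fun _ h => h).
have [z1 [z2 z12]] := two_points inf.
have [i _ U1] := Fc z1 I; have [k _ U2] := Fc z2 I.
have e1 : beta (s i) z1 = x by apply: single; apply: (Ui i); exists z1.
have e2 : beta (s k) z2 = x by apply: single; apply: (Ui k); exists z2.
case: (eqVneq i k) => [ik|ik].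
  subst k; apply: z12; apply: (@act_inj _ _ beta (s i) isa); by rewrite e1 e2.
have : (beta (s i) @` U i `&` beta (s k) @` U k) x.
  by split; [exists z1 | exists z2].
by rewrite Ud // => e; rewrite e eqxx in ik.
Qed.

Lemma hausdorff_sep (X : topologicalType) : hausdorff_space X ->
  forall x y : X, x <> y -> exists P Q : set X,
    [/\ open P, P x, open Q, Q y & P `&` Q = set0].
Proof.
move=> hX x y xy; apply: Classical_Prop.NNPP => H; apply: xy; apply: hX.
move=> A B nA nB; apply: Classical_Prop.NNPP => nAB; apply: H.
exists A°, B°; split.
- exact: open_interior.
- exact: nA.
- exact: open_interior.
- exact: nB.
- apply/seteqP; split => // z [/interior_subset Az /interior_subset Bz].
  by apply: nAB; exists z.
Qed.

Fixpoint interN T (S : nat -> set T) (m : nat) : set T :=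
  if m is m'.+1 then interN S m' `&` S m' else setT.

Lemma interNP T (S : nat -> set T) m z :
  interN S m z -> forall j, (j < m)%N -> S j z.
Proof.
elim: m => [|m IH] //= [Hm Sm] j; rewrite ltnS leq_eqVlt => /orP [/eqP -> //|jm].
exact: IH.
Qed.

Lemma nbhs_interN (X : topologicalType) (x : X) (S : nat -> set X) m :
  (forall j, (j < m)%N -> nbhs x (S j)) -> nbhs x (interN S m).
Proof.
elim: m => [|m IH] /= h; first exact: filterT.
apply: filterI; [apply: IH => j jm; apply: h; exact: ltnW | exact: h].
Qed.

Lemma disjoint_family (X : topologicalType) : hausdorff_space X ->
  (forall (A : set X) (x : X), open A -> A x -> exists y, A y /\ y <> x) ->
  forall n (A : nat -> set X),
  (forall j, (j < n)%N -> open (A j) /\ A j !=set0) ->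
  exists C : nat -> set X,
    (forall j, (j < n)%N -> [/\ open (C j), C j !=set0 & C j `<=` A j]) /\
    (forall i j, (i < n)%N -> (j < n)%N -> i <> j -> C i `&` C j = set0).
Proof.
move=> hX two; elim=> [|n IH] A hA.
  by exists A; split => [j|i j].
have [oA0 [x Ax]] := hA 0%N erefl.
have sep : forall j, exists PQ : set X * set X, (j < n)%N ->
    [/\ open PQ.1, PQ.1 x, open PQ.2, (A j.+1 `&` PQ.2) !=set0
      & PQ.1 `&` PQ.2 = set0].
  move=> j; case: (ltnP j n) => jn; last by exists (setT, set0).
  have [oAj [z Az]] := hA j.+1 jn.
  have [y [Ay yx]] : exists y, A j.+1 y /\ y <> x.
    case: (Classical_Prop.classic (z = x)) => [zx|zx]; last by exists z.
    by subst z; exact: two _ _ oAj Az.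
  have [P [Q [oP Px oQ Qy PQ]]] := @hausdorff_sep X hX x y (fun e => yx (esym e)).
  by exists (P, Q) => _; split => //; exists y.
have [PQ hPQ] := choice sep.
pose A' j := A j.+1 `&` (PQ j).2.
have [C' [hC' dC']] : exists C' : nat -> set X,
    (forall j, (j < n)%N -> [/\ open (C' j), C' j !=set0 & C' j `<=` A' j]) /\
    (forall i j, (i < n)%N -> (j < n)%N -> i <> j -> C' i `&` C' j = set0).
  apply: IH => j jn; have [oP Px oQ ne PQd] := hPQ j jn; split => //.
  apply: openI => //; exact: (hA j.+1 jn).1.
pose D := (A 0%N `&` interN (fun j => (PQ j).1) n)°.
have DP : forall j z, (j < n)%N -> D z -> (PQ j).1 z.
  move=> j z jn /interior_subset [_ hz]; exact: (interNP hz jn).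
have DC : forall j, (j < n)%N -> D `&` C' j = set0.
  move=> j jn; apply/seteqP; split => // z [Dz Cz].
  have [_ _ sub] := hC' j jn; have [_ Qz] := sub z Cz.
  have [_ _ _ _ PQd] := hPQ j jn.
  have : ((PQ j).1 `&` (PQ j).2) z by split => //; exact: (DP j z jn Dz).
  by rewrite PQd.
exists (fun j => if j is j'.+1 then C' j' else D); split.
- case=> [|j] /= jn.
  + split; first exact: open_interior.
    * exists x; rewrite /D /interior /=; apply: filterI.
      - by apply: open_nbhs_nbhs; split.
      - apply: nbhs_interN => k kn; have [oP Px _ _ _] := hPQ k kn.
        by apply: open_nbhs_nbhs; split.
    * by move=> z /interior_subset [].
  + by have [oC neC sub] := hC' j jn; split => // z /sub [].
- move=> i0 j0; case: i0 => [|i]; case: j0 => [|j] //= im jm ij.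
  + exact: DC.
  + by rewrite setIC; apply: DC.
  + by apply: dC' => // e; apply: ij; rewrite e.
Qed.

Lemma unionN_open (Z : topologicalType) (S : nat -> set Z) m :
  (forall j, (j < m)%N -> open (S j)) -> open (unionN S m).
Proof.
elim: m => [|m IH] h /=; first exact: open0.
apply: openU; [apply: IH => j jm; apply: h; exact: ltnW | exact: h].
Qed.

Lemma finite_subcover (Z : topologicalType) (K : set Z) (f : Z -> set Z) :
  compact K -> (forall z, K z -> nbhs z (f z)) ->
  exists s : seq Z, (forall p, p \in s -> K p) /\
    K `<=` (fun z => exists2 p, p \in s & f p z).
Proof.
move=> cK hf; apply: Classical_Prop.NNPP => H.
pose D := [set s : seq Z | forall p, p \in s -> K p].
pose B := fun s : seq Z => K `\` (fun z => exists2 p, p \in s & f p z).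
have FB : Filter (filter_from D B).
  apply: filter_from_filter; first by exists [::].
  move=> i j Di Dj; exists (i ++ j).
  - by move=> p; rewrite mem_cat => /orP [/Di|/Dj].
  - move=> z [Kz nz]; split; split => // -[p ps fpz]; apply: nz; exists p => //;
      by rewrite mem_cat ps ?orbT.
have PB : ProperFilter (filter_from D B).
  apply: filter_from_proper => // s Ds; apply: Classical_Prop.NNPP => ne; apply: H.
  exists s; split => // z Kz; apply: Classical_Prop.NNPP => nz; apply: ne; by exists z.
have GK : filter_from D B K by exists [::] => // z [].
have [p [Kp clp]] := cK _ PB GK.
have GB : filter_from D B (B [:: p]).
  by exists [:: p] => // q; rewrite inE => /eqP ->.
have [z [[Kz nz] fz]] := clp _ _ GB (hf p Kp).
by apply: nz; exists p; rewrite ?inE ?eqxx.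
Qed.

Unset Implicit Arguments.
Set Strict Implicit.

Theorem proposition5p2 (G : groupType) (X Y : topologicalType)
  (beta : G -> X -> X) :
  countable [set: G] -> infinite_set [set: G] ->
  hausdorff_space X -> compact [set: X] -> infinite_set [set: X] ->
  continuous_action beta ->
  minimal_action beta ->
  topologically_free beta ->
  ~ (exists mu, invariant_regular_borel_probability beta mu) ->
  dynamical_comparison beta ->
  hausdorff_space Y -> compact [set: Y] ->
  paradoxical_comparison (Z := (X * Y)%type) (@prod_action G X Y beta).
Proof.
move=> _ _ hX cX iX ca _ _ nomu dc hY cY.
move=> O F oO [p0 Op0] cF FO.
have two := open_not_single iX ca nomu dc.
have subX : forall W : set X, open W -> W !=set0 -> subeq_closed beta setT W.
  move=> W oW neW; apply: (dc setT W) => //; first exact: (@openT X).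
  by move=> mu hmu; exfalso; apply: nomu; exists mu.
have boxE : forall p : X * Y, exists AB : set X * set Y, O p ->
    [/\ open AB.1, open AB.2, AB.1 p.1, AB.2 p.2 & AB.1 `*` AB.2 `<=` O].
  move=> p; case: (Classical_Prop.classic (O p)) => Op; last first.
    by exists (setT, setT).
  have := oO; rewrite openE => /(_ p Op) [QR [n1 n2] sub].
  exists (QR.1°, QR.2°) => _; split.
  - exact: open_interior.
  - exact: open_interior.
  - exact: n1.
  - exact: n2.
  - by move=> z [/interior_subset h1 /interior_subset h2]; apply: sub.
have [box hbox] := choice boxE.
have cF' : compact F.
  apply: (subclosed_compact cF (compact_setX cX cY)) => z _; by split.
have [s [sF Fs]] := finite_subcover (f := fun p => (box p).1 `*` (box p).2) cF'
  (fun z Fz => let: And5 o1 o2 h1 h2 _ := hbox z (FO z Fz) in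
     open_nbhs_nbhs (conj (openX_ o1 o2) (conj h1 h2))).
pose s' := p0 :: s; pose m := size s'.
have m0 : (0 < m)%N by [].
pose q j := nth p0 s' j.
have qO : forall j, (j < m)%N -> O (q j).
  move=> j jm; rewrite /q; have := mem_nth p0 jm; rewrite inE => /orP [/eqP -> //|].
  by move=> /sF /FO.
pose A j := (box (q j)).1; pose B j := (box (q j)).2.
have hAB : forall j, (j < m)%N -> [/\ open (A j), open (B j), A j (q j).1,
    B j (q j).2 & A j `*` B j `<=` O] := fun j jm => hbox _ (qO j jm).
pose A' j := if (j < m)%N then A j else A (j - m)%N.
have hA' : forall j, (j < m + m)%N -> open (A' j) /\ A' j !=set0.
  move=> j jmm; rewrite /A'; case: ifP => jm.
  - by have [oA _ Aq _ _] := hAB j jm; split => //; exists (q j).1.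
  - move/negbT: jm; rewrite -leqNgt => jm.
    have jm2 : (j - m < m)%N by lia.
    by have [oA _ Aq _ _] := hAB _ jm2; split => //; exists (q (j - m)%N).1.
have [C [hC dC]] := disjoint_family hX two hA'.
have hC1 : forall j, (j < m)%N -> [/\ open (C j), C j !=set0 & C j `<=` A j].
  move=> j jm; have := hC j (ltn_addr m jm); by rewrite /A' jm.
have hC2 : forall j, (j < m)%N ->
    [/\ open (C (j + m)%N), C (j + m)%N !=set0 & C (j + m)%N `<=` A j].
  move=> j jm; have jmm : (j + m < m + m)%N by lia.
  have := hC (j + m)%N jmm.
  by rewrite /A' ifF ?addnK //; apply/negbTE; rewrite -leqNgt leq_addl.
pose O1 := unionN (fun j => C j `*` B j) m.
pose O2 := unionN (fun j => C (j + m)%N `*` B j) m.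
have Fcov : F `<=` unionN (fun j => [set: X] `*` B j) m.
  move=> z Fz; have [p ps fpz] := Fs z Fz.
  have ps' : p \in s' by rewrite inE ps orbT.
  apply/unionNP; exists (index p s'); first by rewrite index_mem.
  by split => //; rewrite /B /q nth_index //; case: fpz.
exists O1, O2; split.
- split; apply: unionN_open => j jm; apply: openX_.
  + by case: (hC1 j jm).
  + by case: (hAB j jm).
  + by case: (hC2 j jm).
  + by case: (hAB j jm).
- split.
  + have [_ [x Cx] _] := hC1 0%N m0; exists (x, p0.2); apply/unionNP.
    exists 0%N => //; split => //; by case: (hAB 0%N m0).
  + have [_ [x Cx] _] := hC2 0%N m0; exists (x, p0.2); apply/unionNP.
    exists 0%N => //; split => //; by case: (hAB 0%N m0).
- split.
  + move=> z /unionNP [j jm [Cz Bz]]; have [_ _ _ _ sub] := hAB j jm.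
    apply: sub; split => //; have [_ _ sC] := hC1 j jm; exact: sC.
  + move=> z /unionNP [j jm [Cz Bz]]; have [_ _ _ _ sub] := hAB j jm.
    apply: sub; split => //; have [_ _ sC] := hC2 j jm; exact: sC.
- apply/seteqP; split => // z [/unionNP [j jm [C1 _]] /unionNP [k km [C2 _]]].
  have : (C j `&` C (k + m)%N) z.1 by [].
  by rewrite dC //; lia.
- split.
  + apply: (@subeq_mono _ _ _ (unionN (fun j => [set: X] `*` B j) m) F O1 O1) => //.
    apply: subeq_unionN.
    * move=> j jm; split; first by case: (hAB j jm).
      by have [oC neC _] := hC1 j jm; apply: subX.
    * by move=> i j im jm ij; apply: dC => //; lia.
  + apply: (@subeq_mono _ _ _ (unionN (fun j => [set: X] `*` B j) m) F O2 O2) => //.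
    apply: subeq_unionN.
    * move=> j jm; split; first by case: (hAB j jm).
      by have [oC neC _] := hC2 j jm; apply: subX.
    * by move=> i j im jm ij; apply: dC => //; lia.
Qed.
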